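(* Let $n\ge1$ and let $A_1,\dots,A_n$ be events in a probability space. Then for every $m\in\{0,1,\dots,n-1\}$, \[ \Pr\Big(\bigcup_{i=1}^n A_i\Big) \ge \frac{1}{n-m}\Bigg(\sum_{k=1}^m (-1)^{k-1}\frac{\binom mk}{\binom nk}\cdot\frac{nk-(m+1)(k-1)}{m-k+1}\sum_{1\le i_1<\dots<i_k\le n}\Pr(A_{i_1}\cap\dots\cap A_{i_k}) + (-1)^m\frac{m+1}{\binom nm}\sum_{1\le i_1<\dots<i_{m+1}\le n}\Pr(A_{i_1}\cap\dots\cap A_{i_{m+1}})\Bigg). \]
   Context: An empty sum (e.g. the first sum when $m=0$) equals $0$. *)

(* Defs.v *)
From Stdlib Require Import Reals List Arith.
Import ListNotations.
Open Scope R_scope.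

Record prob_space (Omega : Type) := {
  measurable : (Omega -> Prop) -> Prop;
  Pr : (Omega -> Prop) -> R;
  meas_full : measurable (fun _ => True);
  meas_compl : forall E, measurable E -> measurable (fun w => ~ E w);
  meas_countable_union : forall F : nat -> Omega -> Prop,
      (forall i, measurable (F i)) -> measurable (fun w => exists i, F i w);
  Pr_nonneg : forall E, measurable E -> 0 <= Pr E;
  Pr_full : Pr (fun _ => True) = 1;
  Pr_sigma_additive : forall F : nat -> Omega -> Prop,
      (forall i, measurable (F i)) ->
      (forall i j w, i <> j -> F i w -> F j w -> False) ->
      infinite_sum (fun i => Pr (F i)) (Pr (fun w => exists i, F i w))
}.
Arguments measurable {Omega} _ _.
Arguments Pr {Omega} _ _.

(* All subsets of {0,...,n-1}, each as a strictly increasing list. *)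
Fixpoint subsets (n : nat) : list (list nat) :=
  match n with
  | O => [ [] ]
  | S n' => subsets n' ++ map (fun s => s ++ [n']) (subsets n')
  end.

Definition ksubsets (n k : nat) : list (list nat) :=
  filter (fun s => Nat.eqb (length s) k) (subsets n).

Definition sumR (l : list R) : R := fold_right Rplus 0 l.

Definition inter {Omega : Type} (A : nat -> Omega -> Prop) (s : list nat) : Omega -> Prop :=
  fun w => forall i, In i s -> A i w.

Definition union_upto {Omega : Type} (A : nat -> Omega -> Prop) (n : nat) : Omega -> Prop :=
  fun w => exists i, (i < n)%nat /\ A i w.

Definition Sk {Omega : Type} (P : prob_space Omega) (A : nat -> Omega -> Prop) (n k : nat) : R :=
  sumR (map (fun s => Pr P (inter A s)) (ksubsets n k)).

(* Main.v *)
Require Import Defs.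
From Stdlib Require Import Reals List Arith Lra Lia.
From Stdlib Require Import Classical FunctionalExtensionality PropExtensionality.
Import ListNotations.
Open Scope R_scope.

Fixpoint bin (n k : nat) : nat :=
  match n, k with
  | _, O => 1%nat
  | O, S _ => 0%nat
  | S n', S k' => (bin n' k' + bin n' (S k'))%nat
  end.

Lemma bin_0 n : bin n 0 = 1%nat.
Proof. destruct n; reflexivity. Qed.

Lemma bin_SS n k : bin (S n) (S k) = (bin n k + bin n (S k))%nat.
Proof. reflexivity. Qed.

Lemma bin_gt n : forall k, (n < k)%nat -> bin n k = 0%nat.
Proof.
  induction n; intros k Hk.
  - destruct k; [lia|reflexivity].
  - destruct k; [lia|]. rewrite bin_SS, !IHn; lia.
Qed.

Lemma bin_pos n : forall k, (k <= n)%nat -> (0 < bin n k)%nat.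
Proof.
  induction n; intros k Hk.
  - destruct k; [simpl; lia|lia].
  - destruct k; [rewrite bin_0; lia|]. rewrite bin_SS. specialize (IHn k). lia.
Qed.

Lemma bin_1 n : bin n 1 = n.
Proof. induction n; [reflexivity|]. rewrite bin_SS, bin_0, IHn. lia. Qed.

Lemma bin_succ a : forall k, (S k * bin (S a) (S k) = S a * bin a k)%nat.
Proof.
  induction a; intros k.
  - destruct k; [reflexivity|]. rewrite bin_SS, !bin_gt by lia. lia.
  - destruct k.
    + rewrite bin_SS, bin_1. rewrite bin_0. lia.
    + rewrite (bin_SS (S a) (S k)). rewrite (bin_SS a k).
      pose proof (IHa k) as H1. pose proof (IHa (S k)) as H2.
      rewrite bin_SS in H1. nia.
Qed.

Lemma bin_L5 a M : INR (S M) * INR (bin a (S M)) = (INR a - INR M) * INR (bin a M).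
Proof.
  pose proof (bin_succ a M) as H. rewrite bin_SS in H.
  apply (f_equal INR) in H. rewrite !mult_INR, plus_INR, !S_INR in H.
  rewrite S_INR. nra.
Qed.

Lemma bin_L1 a k : INR (S k) * INR (bin (S a) (S k)) = INR (S a) * INR (bin a k).
Proof. rewrite <- !mult_INR. f_equal. apply bin_succ. Qed.

Lemma bin_mono1 b k : (bin b k <= bin (S b) k)%nat.
Proof. destruct k; [rewrite !bin_0; lia|rewrite bin_SS; lia]. Qed.

Lemma bin_mono a b k : (a <= b)%nat -> (bin a k <= bin b k)%nat.
Proof. induction 1; [lia|]. pose proof (bin_mono1 m k); lia. Qed.

Lemma C_n0 n : C n 0 = 1.
Proof. unfold C. rewrite Nat.sub_0_r. simpl. field. apply INR_fact_neq_0. Qed.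

Lemma C_nn n : C n n = 1.
Proof. unfold C. rewrite Nat.sub_diag. simpl. field. apply INR_fact_neq_0. Qed.

Lemma C_bin n : forall k, (k <= n)%nat -> C n k = INR (bin n k).
Proof.
  induction n; intros k Hk.
  - destruct k; [|lia]. rewrite C_n0. reflexivity.
  - destruct k; [rewrite C_n0, bin_0; reflexivity|].
    destruct (Nat.eq_dec k n).
    + subst. rewrite C_nn, bin_SS, (bin_gt n (S n)) by lia.
      rewrite Nat.add_0_r.
      assert (Hnn : forall p, bin p p = 1%nat).
      { induction p; [reflexivity|]. rewrite bin_SS, IHp, bin_gt by lia. reflexivity. }
      rewrite Hnn. reflexivity.
    + rewrite <- pascal by lia. rewrite !IHn by lia. rewrite bin_SS, plus_INR. reflexivity.
Qed.

Fixpoint sm (f : nat -> R) (N : nat) : R :=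
  match N with O => 0 | S N' => sm f N' + f N' end.

Lemma sm_ext f g N : (forall i, (i < N)%nat -> f i = g i) -> sm f N = sm g N.
Proof. induction N; intros H; simpl; [reflexivity|]. rewrite IHN, H; auto. Qed.

Lemma sm_plus f g N : sm (fun i => f i + g i) N = sm f N + sm g N.
Proof. induction N; simpl; [lra|]. rewrite IHN; lra. Qed.

Lemma sm_scal c f N : sm (fun i => c * f i) N = c * sm f N.
Proof. induction N; simpl; [lra|]. rewrite IHN; lra. Qed.

Lemma sm_zero N : sm (fun _ => 0) N = 0.
Proof. induction N; simpl; [lra|]. rewrite IHN; lra. Qed.

Lemma sm_shift f N : sm f (S N) = f 0%nat + sm (fun i => f (S i)) N.
Proof. induction N; simpl in *; [lra|]. rewrite IHN. lra. Qed.

Lemma sm_swap (F : nat -> nat -> R) N M :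
  sm (fun i => sm (fun j => F i j) M) N = sm (fun j => sm (fun i => F i j) N) M.
Proof.
  induction N; simpl.
  - rewrite sm_zero. reflexivity.
  - rewrite IHN. rewrite <- sm_plus. reflexivity.
Qed.

Lemma sm_le f g N : (forall i, (i < N)%nat -> f i <= g i) -> sm f N <= sm g N.
Proof. induction N; intros H; simpl; [lra|]. pose proof (H N ltac:(lia)). 
  pose proof (IHN (fun i Hi => H i ltac:(lia))). lra. Qed.

Lemma sumR_map_seq f s N : sumR (map f (seq s N)) = sm (fun i => f (s + i)%nat) N.
Proof.
  revert s. induction N; intros s; [reflexivity|].
  rewrite (sm_shift (fun i => f (s + i)%nat)). rewrite Nat.add_0_r.
  cbn [seq map sumR fold_right]. unfold sumR in IHN. rewrite IHN.
  f_equal. apply sm_ext; intros; f_equal; lia.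
Qed.


Lemma Pr_ext {Omega} (P : prob_space Omega) (E F : Omega -> Prop) :
  (forall w, E w <-> F w) -> Pr P E = Pr P F.
Proof. intros H. f_equal. apply functional_extensionality; intro w.
  apply propositional_extensionality; auto. Qed.

Lemma meas_ext {Omega} (P : prob_space Omega) (E F : Omega -> Prop) :
  (forall w, E w <-> F w) -> measurable P E -> measurable P F.
Proof. intros H. replace F with E; auto. apply functional_extensionality; intro w.
  apply propositional_extensionality; auto. Qed.

Definition seq2 {Omega} (E F : Omega -> Prop) (i : nat) : Omega -> Prop :=
  match i with O => E | 1%nat => F | _ => fun _ => False end.

Lemma meas_empty {Omega} (P : prob_space Omega) : measurable P (fun _ => False).
Proof. apply (meas_ext P (fun w => ~ True)). { intuition. } apply meas_compl, meas_full. Qed.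

Lemma meas_or {Omega} (P : prob_space Omega) E F :
  measurable P E -> measurable P F -> measurable P (fun w => E w \/ F w).
Proof.
  intros HE HF. apply (meas_ext P (fun w => exists i, seq2 E F i w)).
  - intros w; split.
    + intros [i Hi]. destruct i as [|[|i]]; simpl in Hi; tauto.
    + intros [H|H]; [exists 0%nat|exists 1%nat]; exact H.
  - apply meas_countable_union. intros [|[|i]]; simpl; auto. apply meas_empty.
Qed.

Lemma meas_not {Omega} (P : prob_space Omega) E :
  measurable P E -> measurable P (fun w => ~ E w).
Proof. apply meas_compl. Qed.

Lemma meas_and {Omega} (P : prob_space Omega) E F :
  measurable P E -> measurable P F -> measurable P (fun w => E w /\ F w).
Proof.
  intros HE HF. apply (meas_ext P (fun w => ~ (~ E w \/ ~ F w))).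
  - intros w. split; [|tauto]. intros H. split; apply NNPP; tauto.
  - apply meas_compl, meas_or; apply meas_compl; auto.
Qed.

Lemma inf_sum_const_zero c l : infinite_sum (fun _ => c) l -> c = 0.
Proof.
  intros H. destruct (Req_dec c 0) as [|Hc]; auto. exfalso.
  assert (He : Rabs c / 2 > 0) by (pose proof (Rabs_pos_lt c Hc); lra).
  destruct (H _ He) as [N HN].
  pose proof (HN N (le_n _)) as H1. pose proof (HN (S N) (le_S _ _ (le_n _))) as H2.
  unfold R_dist in *. simpl in H2.
  set (s := sum_f_R0 (fun _ => c) N) in *.
  destruct (Rcase_abs c) as [Hn|Hp];
  [rewrite (Rabs_left c) in * by lra | rewrite (Rabs_right c) in * by lra];
  apply Rabs_def2 in H1; apply Rabs_def2 in H2; lra.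
Qed.

Lemma Pr_empty {Omega} (P : prob_space Omega) : Pr P (fun _ => False) = 0.
Proof.
  pose proof (Pr_sigma_additive _ P (fun _ => fun _ => False)
    (fun _ => meas_empty P) (fun i j w _ H _ => H)) as H.
  simpl in H. apply inf_sum_const_zero in H. exact H.
Qed.

Lemma Pr_add2 {Omega} (P : prob_space Omega) E F :
  measurable P E -> measurable P F -> (forall w, E w -> F w -> False) ->
  Pr P (fun w => E w \/ F w) = Pr P E + Pr P F.
Proof.
  intros HE HF Hd.
  assert (Hm : forall i, measurable P (seq2 E F i)).
  { intros [|[|i]]; simpl; auto. apply meas_empty. }
  assert (Hdisj : forall i j w, i <> j -> seq2 E F i w -> seq2 E F j w -> False).
  { intros [|[|i]] [|[|j]] w Hij; simpl; try tauto; try lia; eauto. }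
  pose proof (Pr_sigma_additive _ P _ Hm Hdisj) as H1.
  rewrite (Pr_ext P _ (fun w => E w \/ F w)) in H1.
  2:{ intros w; split.
    + intros [i Hi]. destruct i as [|[|i]]; simpl in Hi; tauto.
    + intros [H|H]; [exists 0%nat|exists 1%nat]; exact H. }
  apply (uniqueness_sum _ _ _ H1).
  intros eps Heps. exists 1%nat. intros n Hn.
  assert (Hs : sum_f_R0 (fun i => Pr P (seq2 E F i)) n = Pr P E + Pr P F).
  { induction n; [lia|]. destruct n; [simpl; lra|].
    simpl sum_f_R0 in *. rewrite IHn by lia. simpl. rewrite Pr_empty. lra. }
  rewrite Hs. unfold R_dist. rewrite Rminus_diag, Rabs_R0. lra.
Qed.

Lemma Pr_split {Omega} (P : prob_space Omega) E G :
  measurable P E -> measurable P G ->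
  Pr P E = Pr P (fun w => E w /\ G w) + Pr P (fun w => E w /\ ~ G w).
Proof.
  intros HE HG. rewrite <- Pr_add2.
  - apply Pr_ext. intros w. destruct (classic (G w)); tauto.
  - apply meas_and; auto.
  - apply meas_and; auto. apply meas_compl; auto.
  - tauto.
Qed.

Fixpoint Ex {Omega} (A : nat -> Omega -> Prop) (n j : nat) : Omega -> Prop :=
  match n with
  | O => fun _ => j = 0%nat
  | S n' => fun w => match j with
      | O => ~ A n' w /\ Ex A n' 0 w
      | S j' => (A n' w /\ Ex A n' j' w) \/ (~ A n' w /\ Ex A n' (S j') w)
      end
  end.

Lemma Ex_meas {Omega} (P : prob_space Omega) A n :
  (forall i, (i < n)%nat -> measurable P (A i)) -> forall j, measurable P (Ex A n j).
Proof.
  induction n; intros hA j.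
  - simpl. destruct j.
    + apply (meas_ext P (fun _ => True)); [intuition|apply meas_full].
    + apply (meas_ext P (fun _ => False)); [intuition; lia|apply meas_empty].
  - assert (H1 : forall i, (i < n)%nat -> measurable P (A i)) by (intros; apply hA; lia).
    assert (H2 := hA n ltac:(lia)).
    destruct j; simpl.
    + apply meas_and; [apply meas_compl; auto|apply IHn; auto].
    + apply meas_or; apply meas_and; auto; apply meas_compl; auto.
Qed.

Lemma Ex_bound {Omega} (A : nat -> Omega -> Prop) n : forall j w, Ex A n j w -> (j <= n)%nat.
Proof.
  induction n; intros j w H; simpl in H; [lia|].
  destruct j; [lia|]. destruct H as [[_ H]|[_ H]]; apply IHn in H; lia.
Qed.

Lemma Ex_zero {Omega} (A : nat -> Omega -> Prop) n w :
  Ex A n 0 w <-> forall i, (i < n)%nat -> ~ A i w.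
Proof.
  induction n; simpl.
  - split; auto. intros; lia.
  - rewrite IHn. split.
    + intros [H1 H2] i Hi. destruct (Nat.eq_dec i n); subst; auto. apply H2; lia.
    + intros H; split; auto.
Qed.

Lemma ksub0 n : ksubsets n 0 = [[]].
Proof.
  unfold ksubsets. induction n; [reflexivity|].
  simpl. rewrite filter_app, IHn.
  assert (H : forall l : list (list nat), filter (fun s => Nat.eqb (length s) 0)
             (map (fun s => s ++ [n]) l) = []).
  { induction l; simpl; auto. rewrite length_app. simpl.
    rewrite Nat.add_comm. simpl. auto. }
  rewrite H. reflexivity.
Qed.

Lemma ksubSS n k : ksubsets (S n) (S k) =
  ksubsets n (S k) ++ map (fun s => s ++ [n]) (ksubsets n k).
Proof.
  unfold ksubsets. simpl. rewrite filter_app. f_equal.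
  induction (subsets n); simpl; auto. rewrite length_app. simpl.
  rewrite Nat.add_comm. simpl. destruct (Nat.eqb (length a) k); simpl; rewrite IHl; auto.
Qed.

Lemma inter_app {Omega} (A : nat -> Omega -> Prop) s n w :
  inter A (s ++ [n]) w <-> inter A s w /\ A n w.
Proof.
  unfold inter. split.
  - intros H. split; [intros i Hi; apply H; apply in_or_app; auto|apply H; apply in_or_app; simpl; auto].
  - intros [H1 H2] i Hi. apply in_app_or in Hi. destruct Hi as [Hi|[Hi|[]]]; subst; auto.
Qed.

Lemma sumR_app l1 l2 : sumR (l1 ++ l2) = sumR l1 + sumR l2.
Proof. induction l1; simpl; [lra|]. unfold sumR in *. simpl. rewrite IHl1. lra. Qed.

Lemma D_lemma {Omega} (P : prob_space Omega) A n (c : nat -> R) E :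
  (forall i, (i < S n)%nat -> measurable P (A i)) -> measurable P E ->
  sm (fun j => c j * Pr P (fun w => E w /\ Ex A (S n) j w)) (S (S n)) =
  sm (fun j => c (S j) * Pr P (fun w => (E w /\ A n w) /\ Ex A n j w)) (S n) +
  sm (fun j => c j * Pr P (fun w => (E w /\ ~ A n w) /\ Ex A n j w)) (S n).
Proof.
  intros hA HE.
  assert (hA' : forall i, (i < n)%nat -> measurable P (A i)) by (intros; apply hA; lia).
  assert (HAn := hA n ltac:(lia)).
  set (a := fun j => Pr P (fun w => (E w /\ A n w) /\ Ex A n j w)).
  set (b := fun j => Pr P (fun w => (E w /\ ~ A n w) /\ Ex A n j w)).
  assert (H0 : Pr P (fun w => E w /\ Ex A (S n) 0 w) = b 0%nat).
  { apply Pr_ext. intros w; simpl. tauto. }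
  assert (HS : forall j, Pr P (fun w => E w /\ Ex A (S n) (S j) w) = a j + b (S j)).
  { intros j. unfold a, b. rewrite <- Pr_add2.
    - apply Pr_ext. intros w; simpl. tauto.
    - apply meas_and; [apply meas_and|]; auto. apply Ex_meas; auto.
    - apply meas_and; [apply meas_and|]; auto. apply meas_compl; auto. apply Ex_meas; auto.
    - tauto. }
  assert (Hb : b (S n) = 0).
  { unfold b. rewrite <- (Pr_empty P). apply Pr_ext. intros w; split; [|tauto].
    intros [_ H]. apply Ex_bound in H. lia. }
  change (sm (fun j => c j * Pr P (fun w => E w /\ Ex A (S n) j w)) (S (S n)) =
    sm (fun j => c (S j) * a j) (S n) + sm (fun j => c j * b j) (S n)).
  rewrite sm_shift. rewrite H0.
  rewrite (sm_ext _ (fun j => c (S j) * a j + c (S j) * b (S j))).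
  2:{ intros i _. rewrite HS. lra. }
  rewrite sm_plus.
  assert (E1 := sm_shift (fun j => c j * b j) (S n)).
  assert (E2 : sm (fun j => c j * b j) (S (S n)) = sm (fun j => c j * b j) (S n) + c (S n) * b (S n)) by reflexivity.
  rewrite Hb in E2. lra.
Qed.

Lemma total_lemma {Omega} (P : prob_space Omega) A n :
  (forall i, (i < n)%nat -> measurable P (A i)) ->
  forall E, measurable P E ->
  sm (fun j => Pr P (fun w => E w /\ Ex A n j w)) (S n) = Pr P E.
Proof.
  induction n; intros hA E HE.
  - simpl. rewrite Rplus_0_l. apply Pr_ext. intros w; tauto.
  - assert (hA' : forall i, (i < n)%nat -> measurable P (A i)) by (intros; apply hA; lia).
    assert (HAn := hA n ltac:(lia)).
    rewrite (sm_ext _ (fun j => 1 * Pr P (fun w => E w /\ Ex A (S n) j w))) by (intros; lra).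
    rewrite D_lemma by auto.
    rewrite (sm_ext _ (fun j => Pr P (fun w => (E w /\ A n w) /\ Ex A n j w))) by (intros; lra).
    rewrite (sm_ext (fun j => 1 * _) (fun j => Pr P (fun w => (E w /\ ~ A n w) /\ Ex A n j w))) by (intros; lra).
    rewrite !IHn; auto.
    + symmetry. apply Pr_split; auto.
    + apply meas_and; auto. apply meas_compl; auto.
    + apply meas_and; auto.
Qed.

Lemma G_lemma {Omega} (P : prob_space Omega) A n :
  (forall i, (i < n)%nat -> measurable P (A i)) ->
  forall k E, measurable P E ->
  sumR (map (fun s => Pr P (fun w => E w /\ inter A s w)) (ksubsets n k)) =
  sm (fun j => INR (bin j k) * Pr P (fun w => E w /\ Ex A n j w)) (S n).
Proof.
  induction n; intros hA k E HE.
  - destruct k.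
    + rewrite ksub0. simpl. rewrite Rplus_0_r, Rplus_0_l, Rmult_1_l.
      apply Pr_ext. intros w. unfold inter. simpl. intuition.
    + simpl. lra.
  - assert (hA' : forall i, (i < n)%nat -> measurable P (A i)) by (intros; apply hA; lia).
    assert (HAn := hA n ltac:(lia)).
    destruct k.
    + rewrite ksub0. simpl sumR. rewrite (sm_ext _ (fun j => Pr P (fun w => E w /\ Ex A (S n) j w)))
        by (intros; rewrite bin_0; simpl; lra).
      rewrite total_lemma; auto. unfold sumR; simpl. rewrite Rplus_0_r.
      apply Pr_ext. intros w. unfold inter. simpl. intuition.
    + rewrite ksubSS, map_app, sumR_app, map_map.
      rewrite (map_ext (fun x => Pr P (fun w => E w /\ inter A (x ++ [n]) w)) (fun s => Pr P (fun w => (E w /\ A n w) /\ inter A s w))).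
      2:{ intros s. apply Pr_ext. intros w. rewrite inter_app. tauto. }
      rewrite !IHn; auto; [|apply meas_and; auto].
      pose proof (D_lemma P A n (fun j => INR (bin j (S k))) E hA HE) as HD.
      cbv beta in HD. rewrite HD. clear HD.
      rewrite (sm_ext (fun j => INR (bin j (S k)) * Pr P (fun w => E w /\ Ex A n j w))
        (fun j => INR (bin j (S k)) * Pr P (fun w => (E w /\ A n w) /\ Ex A n j w) +
                  INR (bin j (S k)) * Pr P (fun w => (E w /\ ~ A n w) /\ Ex A n j w))).
      2:{ intros j _. rewrite <- Rmult_plus_distr_l. f_equal.
          rewrite (Pr_split P _ (A n)); auto.
          - f_equal; apply Pr_ext; intros w; tauto.
          - apply meas_and; auto. apply Ex_meas; auto. }
      rewrite (sm_ext (fun j => INR (bin (S j) (S k)) * _)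
        (fun j => INR (bin j k) * Pr P (fun w => (E w /\ A n w) /\ Ex A n j w) +
                  INR (bin j (S k)) * Pr P (fun w => (E w /\ A n w) /\ Ex A n j w))).
      2:{ intros j _. rewrite bin_SS, plus_INR. lra. }
      rewrite !sm_plus. lra.
Qed.

Definition bb (k j n : nat) : R := INR (bin j k) / INR (bin n k).
Definition T (M j n : nat) : R := sm (fun k => (-1)^k * INR (bin M k) * bb k j n) (S M).

Lemma binR_pos n k : (k <= n)%nat -> 0 < INR (bin n k).
Proof. intros H. apply lt_0_INR. apply bin_pos; auto. Qed.

Lemma bratio k j' n' : (k <= n')%nat ->
  bb (S k) (S j') (S n') = INR (S j') / INR (S n') * bb k j' n'.
Proof.
  intros Hk. unfold bb.
  pose proof (bin_L1 j' k) as H1. pose proof (bin_L1 n' k) as H2.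
  pose proof (binR_pos n' k Hk) as H3.
  assert (H4 : 0 < INR (S k)) by (apply lt_0_INR; lia).
  assert (H5 : 0 < INR (S n')) by (apply lt_0_INR; lia).
  assert (Ha : INR (bin (S j') (S k)) = INR (S j') * INR (bin j' k) / INR (S k)).
  { rewrite <- H1. field. lra. }
  assert (Hb : INR (bin (S n') (S k)) = INR (S n') * INR (bin n' k) / INR (S k)).
  { rewrite <- H2. field. lra. }
  rewrite Ha, Hb. field. repeat split; lra.
Qed.

Lemma T_rec M j' n' : (M <= n')%nat ->
  T (S M) (S j') (S n') = T M (S j') (S n') - INR (S j') / INR (S n') * T M j' n'.
Proof.
  intros HM. unfold T.
  rewrite (sm_shift _ (S M)).
  rewrite (sm_ext (fun i => (-1) ^ S i * INR (bin (S M) (S i)) * bb (S i) (S j') (S n'))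
     (fun i => (-1) ^ S i * INR (bin M (S i)) * bb (S i) (S j') (S n') +
               (-(INR (S j') / INR (S n'))) * ((-1) ^ i * INR (bin M i) * bb i j' n'))).
  2:{ intros i Hi. rewrite bin_SS, plus_INR. rewrite bratio by lia. simpl pow. ring. }
  rewrite sm_plus, sm_scal.
  assert (E2 : sm (fun i => (-1) ^ S i * INR (bin M (S i)) * bb (S i) (S j') (S n')) (S M) =
    sm (fun i => (-1) ^ S i * INR (bin M (S i)) * bb (S i) (S j') (S n')) M) .
  { change (sm ?f (S M)) with (sm f M + f M). cbv beta. rewrite (bin_gt M (S M)) by lia. simpl INR. ring. }
  rewrite E2. rewrite (sm_shift (fun k => (-1) ^ k * INR (bin M k) * bb k (S j') (S n')) M).
  rewrite !bin_0. lra.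
Qed.

Lemma T_closed M : forall j n, (M <= n)%nat -> (j <= n)%nat ->
  T M j n = INR (bin (n - j) M) / INR (bin n M).
Proof.
  induction M; intros j n HM Hj.
  - unfold T, bb. simpl. rewrite !bin_0. simpl. field.
  - destruct j as [|j'].
    + unfold T. rewrite sm_shift.
      rewrite (sm_ext _ (fun _ => 0)).
      2:{ intros i _. unfold bb. simpl bin. simpl INR. unfold Rdiv. ring. }
      rewrite sm_zero. unfold bb. rewrite !bin_0, Nat.sub_0_r. simpl. field.
      apply Rgt_not_eq, binR_pos; auto.
    + destruct n as [|n']; [lia|].
      rewrite T_rec by lia. rewrite !IHM by lia.
      replace (S n' - S j')%nat with (n' - j')%nat by reflexivity.
      set (a := (n' - j')%nat).
      pose proof (bin_L5 a M) as H1.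
      pose proof (bin_L5 (S n') M) as H2.
      pose proof (bin_L1 n' M) as H3.
      pose proof (binR_pos (S n') M ltac:(lia)) as HY.
      pose proof (binR_pos n' M ltac:(lia)) as HY'.
      pose proof (binR_pos (S n') (S M) ltac:(lia)) as HY2.
      assert (Ha : INR a = INR n' - INR j') by (unfold a; rewrite minus_INR by lia; reflexivity).
      assert (HSM : 0 < INR (S M)) by (apply lt_0_INR; lia).
      assert (HnM : INR M < INR (S n')) by (apply lt_INR; lia).
      pose proof (pos_INR n'). pose proof (pos_INR M). rewrite !S_INR in *.
      assert (EX2 : INR (bin a (S M)) = (INR a - INR M) * INR (bin a M) / (INR M + 1)).
      { rewrite <- H1. field. lra. }
      assert (EY2 : INR (bin (S n') (S M)) = (INR n' + 1 - INR M) * INR (bin (S n') M) / (INR M + 1)).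
      { rewrite <- H2. field. lra. }
      assert (EY' : INR (bin n' M) = (INR n' + 1 - INR M) * INR (bin (S n') M) / (INR n' + 1)).
      { apply (Rmult_eq_reg_l (INR n' + 1)); [|lra]. rewrite <- H3. rewrite EY2. field. lra. }
      rewrite EX2, EY2, EY', Ha. field. repeat split; lra.
Qed.

Definition gg (m n j : nat) : R :=
  sm (fun i => (-1)^i * (INR (bin m (S i)) / INR (bin n (S i))) *
     ((INR n * INR (S i) - (INR m + 1) * INR i) / (INR m - INR (S i) + 1)) * INR (bin j (S i))) m
  + (-1)^m * ((INR m + 1) / INR (bin n m)) * INR (bin j (S m)).

Lemma gg_eq m n' j' : (m <= n')%nat ->
  gg m (S n') (S j') = 1 - T m (S j') (S n') +
     (INR (S n') - INR m) * (INR (S j') / INR (S n') * T m j' n').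
Proof.
  intros Hm. set (j := S j'). set (n := S n').
  assert (Ea : T m j n = 1 + sm (fun i => (-1)^(S i) * INR (bin m (S i)) * bb (S i) j n) m).
  { unfold T. rewrite sm_shift. unfold bb. rewrite !bin_0. simpl. field. }
  assert (Eb : INR j / INR n * T m j' n' =
     sm (fun i => (-1)^i * INR (bin m i) * bb (S i) j n) m + (-1)^m * bb (S m) j n).
  { unfold T. rewrite <- sm_scal.
    rewrite (sm_ext _ (fun i => (-1)^i * INR (bin m i) * bb (S i) j n)).
    2:{ intros i Hi. unfold j, n. rewrite bratio by lia. ring. }
    change (sm ?f (S m)) with (sm f m + f m). cbv beta.
    assert (Hmm : forall p, bin p p = 1%nat).
    { induction p; [reflexivity|]. rewrite bin_SS, IHp, bin_gt by lia. reflexivity. }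
    rewrite Hmm. simpl INR. ring. }
  rewrite Ea, Eb. unfold gg.
  rewrite (sm_ext _ (fun i => (-1) * ((-1)^(S i) * INR (bin m (S i)) * bb (S i) j n) +
      (INR n - INR m) * ((-1)^i * INR (bin m i) * bb (S i) j n))).
  2:{ intros i Hi. unfold bb.
      pose proof (bin_L5 m i) as H1.
      pose proof (binR_pos n (S i) ltac:(unfold n; lia)) as H2.
      assert (H3 : INR i < INR m) by (apply lt_INR; lia).
      pose proof (pos_INR i).
      rewrite !S_INR in *.
      assert (EX : INR (bin m i) = (INR i + 1) * INR (bin m (S i)) / (INR m - INR i)).
      { rewrite H1. field. lra. }
      rewrite EX. simpl pow. field. lra. }
  rewrite sm_plus, !sm_scal.
  pose proof (bin_L5 n m) as H1.
  pose proof (binR_pos n (S m) ltac:(unfold n; lia)) as H2.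
  pose proof (binR_pos n m ltac:(unfold n; lia)) as H2'.
  assert (Hl : (-1) ^ m * ((INR m + 1) / INR (bin n m)) * INR (bin j (S m)) =
     (INR n - INR m) * ((-1)^m * bb (S m) j n)).
  { unfold bb. assert (EY : INR (bin n m) = INR (S m) * INR (bin n (S m)) / (INR n - INR m)).
    { rewrite H1. field. assert (INR m < INR n) by (apply lt_INR; unfold n; lia). lra. }
    rewrite EY. rewrite S_INR. field.
    assert (INR m < INR n) by (apply lt_INR; unfold n; lia). pose proof (pos_INR m).
    repeat split; try lra. }
  rewrite Hl. ring.
Qed.

Lemma gg_bound m n j : (m < n)%nat -> (1 <= j <= n)%nat -> gg m n j <= INR n - INR m.
Proof.
  intros Hm Hj. destruct n as [|n']; [lia|]. destruct j as [|j']; [lia|].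
  rewrite gg_eq by lia. rewrite !T_closed by lia.
  replace (S n' - S j')%nat with (n' - j')%nat by reflexivity.
  set (a := (n' - j')%nat).
  pose proof (bin_L5 (S n') m) as H2.
  pose proof (bin_L1 n' m) as H3.
  pose proof (binR_pos (S n') m ltac:(lia)) as HY.
  pose proof (binR_pos n' m ltac:(lia)) as HY'.
  assert (HSm : 0 < INR (S m)) by (apply lt_0_INR; lia).
  assert (HnM : INR m < INR (S n')) by (apply lt_INR; lia).
  assert (EY' : INR (bin n' m) = (INR (S n') - INR m) * INR (bin (S n') m) / INR (S n')).
  { apply (Rmult_eq_reg_l (INR (S n'))); [|apply not_0_INR; lia]. rewrite <- H3, H2.
    field. apply not_0_INR; lia. }
  rewrite EY'.
  set (X := INR (bin a m)). set (Y := INR (bin (S n') m)).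
  assert (HX0 : 0 <= X) by apply pos_INR. assert (HY0 : 0 < Y) by exact HY.
  assert (Hn0 : 0 < INR (S n')) by (apply lt_0_INR; lia).
  replace (1 - X / Y + (INR (S n') - INR m) * (INR (S j') / INR (S n') *
     (X / ((INR (S n') - INR m) * Y / INR (S n')))))
    with (1 + (INR (S j') - 1) * X / Y) by (field; repeat split; lra).
  assert (Hkey : (INR (S j') - 1) * X <= (INR (S n') - INR m - 1) * Y).
  { destruct (Nat.lt_ge_cases a m) as [Ham|Ham].
    - unfold X. rewrite bin_gt by auto. change (INR 0) with 0.
      assert (INR m + 1 <= INR (S n')) by (rewrite <- S_INR; apply le_INR; lia). rewrite Rmult_0_r. apply Rmult_le_pos; lra.
    - assert (HXY : X <= Y) by (apply le_INR, bin_mono; unfold a; lia).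
      assert (INR (S j') + INR m <= INR (S n')) by (rewrite <- plus_INR; apply le_INR; unfold a in Ham; lia).
      assert (1 <= INR (S j')) by (rewrite S_INR; pose proof (pos_INR j'); lra).
      nra. }
  apply Rle_trans with (1 + (INR (S n') - INR m - 1) * Y / Y).
  - unfold Rdiv. apply Rplus_le_compat_l. apply Rmult_le_compat_r; [left; apply Rinv_0_lt_compat; lra|]. exact Hkey.
  - right. field. lra.
Qed.

Lemma sm_scal_r c f N : sm (fun i => f i * c) N = sm f N * c.
Proof. rewrite (sm_ext _ (fun i => c * f i)) by (intros; ring). rewrite sm_scal. ring. Qed.

Lemma gg0 m n : gg m n 0 = 0.
Proof.
  unfold gg. rewrite (sm_ext _ (fun _ => 0)) by (intros; simpl; ring).
  rewrite sm_zero. simpl. ring.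
Qed.

Theorem corollary5 (Omega : Type) (P : prob_space Omega)
  (n : nat) (A : nat -> Omega -> Prop)
  (hn : (1 <= n)%nat)
  (hA : forall i, (i < n)%nat -> measurable P (A i))
  (m : nat) (hm : (m <= n - 1)%nat) :
  Pr P (union_upto A n) >=
  / (INR n - INR m) *
  ( sumR (map (fun k =>
        (-1) ^ (k - 1) * (C m k / C n k)
        * ((INR n * INR k - (INR m + 1) * (INR k - 1)) / (INR m - INR k + 1))
        * Sk P A n k) (seq 1 m))
    + (-1) ^ m * ((INR m + 1) / C n m) * Sk P A n (m + 1) ).
Proof.
  set (p := fun j => Pr P (fun w => True /\ Ex A n j w)).
  assert (Hp : forall j, 0 <= p j).
  { intros j. apply Pr_nonneg. apply meas_and; [apply meas_full|apply Ex_meas; auto]. }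
  assert (HSk : forall k, Sk P A n k = sm (fun j => INR (bin j k) * p j) (S n)).
  { intros k. unfold Sk, p. rewrite <- (G_lemma P A n hA k (fun _ => True) (meas_full _ P)).
    f_equal. apply map_ext. intros s. apply Pr_ext. tauto. }
  assert (Hunion : Pr P (union_upto A n) = sm (fun j => p (S j)) n).
  { pose proof (total_lemma P A n hA (fun _ => True) (meas_full _ P)) as Ht.
    rewrite (Pr_full _ P) in Ht. fold p in Ht. rewrite sm_shift in Ht.
    pose proof (Pr_split P (fun _ => True) (Ex A n 0) (meas_full _ P) (Ex_meas P A n hA 0)) as Hs.
    rewrite (Pr_full _ P) in Hs.
    assert (Hu : Pr P (union_upto A n) = Pr P (fun w => True /\ ~ Ex A n 0 w)).
    { apply Pr_ext. intros w. rewrite Ex_zero. unfold union_upto. split.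
      - intros [i [Hi Ha]]. split; auto. intros H. apply (H i Hi Ha).
      - intros [_ H]. apply NNPP. intros H2. apply H. intros i Hi Ha. apply H2. exists i; auto. }
    rewrite Hu. change (Pr P (fun w => True /\ Ex A n 0 w)) with (p 0%nat) in Hs. lra. }
  assert (Hnm : INR m < INR n) by (apply lt_INR; lia).
  set (cf := fun i => (-1)^i * (INR (bin m (S i)) / INR (bin n (S i))) *
     ((INR n * INR (S i) - (INR m + 1) * INR i) / (INR m - INR (S i) + 1))).
  assert (Hbr : sumR (map (fun k =>
        (-1) ^ (k - 1) * (C m k / C n k)
        * ((INR n * INR k - (INR m + 1) * (INR k - 1)) / (INR m - INR k + 1))
        * Sk P A n k) (seq 1 m))
    + (-1) ^ m * ((INR m + 1) / C n m) * Sk P A n (m + 1) = sm (fun j => gg m n j * p j) (S n)).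
  { rewrite sumR_map_seq.
    rewrite (sm_ext _ (fun i => sm (fun j => cf i * INR (bin j (S i)) * p j) (S n))).
    2:{ intros i Hi. cbv beta. replace (1 + i)%nat with (S i) by lia.
        rewrite HSk, <- sm_scal. apply sm_ext. intros j _.
        replace (S i - 1)%nat with i by lia.
        rewrite !C_bin by lia. unfold cf. rewrite !S_INR. replace (INR i + 1 - 1) with (INR i) by ring. ring. }
    rewrite sm_swap. rewrite Nat.add_1_r, HSk, <- sm_scal, <- sm_plus.
    apply sm_ext. intros j _. unfold gg.
    rewrite C_bin by lia.
    rewrite Rmult_plus_distr_r, <- (sm_scal_r (p j)). f_equal; try ring; try (apply sm_ext; intros i _; unfold cf; ring).
  }
  rewrite Hbr, Hunion. rewrite sm_shift, gg0.
  assert (Hle : sm (fun j => gg m n (S j) * p (S j)) n <= sm (fun j => (INR n - INR m) * p (S j)) n).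
  { apply sm_le. intros i Hi. apply Rmult_le_compat_r; auto. apply gg_bound; lia. }
  rewrite sm_scal in Hle.
  apply Rle_ge.
  apply Rle_trans with (/ (INR n - INR m) * ((INR n - INR m) * sm (fun j => p (S j)) n)).
  - apply Rmult_le_compat_l; [left; apply Rinv_0_lt_compat; lra|]. lra.
  - right. field. lra.
Qed.
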